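(* For every $m \in \mathbb{N}$, the $m$-uniform hypergraph $\mathcal{H}_m = (V, \mathcal{E}_s \cup \mathcal{E}_p)$ defined below admits no polychromatic coloring with $2$ colors, i.e., for every coloring $\phi\colon V \to \{\text{red},\text{blue}\}$ some hyperedge of $\mathcal{H}_m$ is monochromatic.
   Context: Construction of $\mathcal{H}_m$: first a rooted forest $F_m$ with $m^m$ trees is built, whose vertices are partitioned into ''stages''; each stage $S$ carries a total order $<_S$, and all vertices of a stage have the same distance $j$ (the level of $S$) to the root of their tree; a stage on level $j \in \{0,\dots,m-1\}$ has $m^{m-j}$ vertices. Start with $m^m$ roots, which form the unique stage on level $0$, ordered in an arbitrary fixed way. Then, for every already defined stage $S$ on level $j < m-1$ and every subset $S' \subseteq S$ with $|S'| = m^{m-j-1}$, add a new stage $T(S')$ on level $j+1$ consisting of $m^{m-j-1}$ new vertices such that every vertex of $S'$ gets exactly one child from $T(S')$, and order $T(S')$ by $<_{T(S')}$ as their parents are ordered by $<_S$. The hypergraph $\mathcal{H}_m$ has vertex set $V = V(F_m)$ and two kinds of hyperedges: stage-hyperedges $\mathcal{E}_s$, namely for every stage $S$ each set of $m$ consecutive vertices in $<_S$; and path-hyperedges $\mathcal{E}_p$, namely the vertex set of every root-to-leaf path in $F_m$ (leaves are on level $m-1$). A $2$-coloring is polychromatic if every hyperedge contains vertices of both colors. *)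

(* Defs.v *)
From mathcomp Require Import all_boot.
Set Implicit Arguments. Unset Strict Implicit. Unset Printing Implicit Defensive.

(* A stage on level j is encoded by the list [A_0; ...; A_{j-1}] of the choices
   made to create it: the unique level-0 stage is [::]; its m^m vertices are
   indexed 0,...,m^m-1 in the order <_S.  If a stage S on level i is encoded by
   s (and has m^(m-i) vertices, indexed 0.. in the order <_S), then for a subset
   S' of S of size m^(m-i-1), given as the strictly increasing list A of the
   indices of its elements, the new stage T(S') is encoded by rcons s A; its
   k-th vertex (in the order <_T(S')) is the child of the k-th element of S',
   i.e. of the vertex with index nth 0 A k of S. *)

Definition stage_code := seq (seq nat).
Definition vert := (stage_code * nat)%type.

Definition valid_stage (m : nat) (s : stage_code) : bool :=
  (size s <= m.-1) &&
  all (fun i => let A := nth [::] s i in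
                [&& sorted ltn A, all (fun a => a < m ^ (m - i)) A
                  & size A == m ^ (m - i.+1)])
      (iota 0 (size s)).

Definition vertex (m : nat) (v : vert) : bool :=
  valid_stage m v.1 && (v.2 < m ^ (m - size v.1)).

(* the list of ancestors (including itself) of the vertex (rev r, k) *)
Fixpoint anc (r : stage_code) (k : nat) : seq vert :=
  match r with
  | [::] => [:: ([::], k)]
  | A :: r' => (rev r, k) :: anc r' (nth 0 A k)
  end.

Definition root_path (v : vert) : seq vert := anc (rev v.1) v.2.

Definition stage_edge (m : nat) (e : seq vert) : Prop :=
  exists (s : stage_code) (i : nat),
    [/\ valid_stage m s, i + m <= m ^ (m - size s)
      & e = [seq (s, i + a) | a <- iota 0 m]].

Definition path_edge (m : nat) (e : seq vert) : Prop :=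
  exists v : vert, [/\ vertex m v, size v.1 = m.-1 & e = root_path v].

Definition hyperedge (m : nat) (e : seq vert) : Prop :=
  stage_edge m e \/ path_edge m e.

(* a 2-coloring (true = red, false = blue) is polychromatic if every hyperedge
   contains vertices of both colors *)
Definition polychromatic (m : nat) (phi : vert -> bool) : Prop :=
  forall e, hyperedge m e ->
    (exists2 u, u \in e & phi u = true) /\ (exists2 v, v \in e & phi v = false).

(* Main.v *)
Require Import Defs.
From mathcomp Require Import all_boot.

Section P.
Variables (m : nat) (phi : vert -> bool).
Hypothesis H : polychromatic m phi.

Lemma count_red s : valid_stage m s -> forall q, q * m <= m ^ (m - size s) ->
  q <= count (fun k => phi (s, k)) (iota 0 (q * m)).
Proof.
move=> vs; elim=> [|q IH] // hq.
rewrite mulSn addnC iotaD count_cat add0n -addn1 leq_add //.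
  by apply: IH; apply: leq_trans hq; rewrite mulSn leq_addl.
have hb : q * m + m <= m ^ (m - size s) by rewrite addnC -mulSn.
have [[u ue pu] _] := H _ (or_introl (ex_intro _ s (ex_intro _ (q * m)
   (And3 vs hb erefl)))).
rewrite -has_count; apply/hasP.
move: ue pu => /mapP [a ai ->] pu; exists (q * m + a) => //.
by move: ai; rewrite !mem_iota /= add0n leq_addr ltn_add2l.
Qed.

Definition Good s := forall k, k < m ^ (m - size s) ->
  forall u, u \in behead (root_path (s, k)) -> phi u.

Lemma root_path_rcons s A k :
  root_path (rcons s A, k) = (rcons s A, k) :: root_path (s, nth 0 A k).
Proof. by rewrite /root_path /= rev_rcons /= rev_cons revK. Qed.

Lemma root_path_head s k : exists t, root_path (s, k) = (s, k) :: t.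
Proof.
case/lastP: s => [|s A]; first by exists [::].
by rewrite root_path_rcons; eexists.
Qed.

Lemma step s : valid_stage m s -> size s < m.-1 -> Good s ->
  exists A, [/\ valid_stage m (rcons s A), size (rcons s A) = (size s).+1
             & Good (rcons s A)].
Proof.
move=> vs lt Gs.
set j := size s.
set N := m ^ (m - j.+1).
set R := filter (fun k => phi (s, k)) (iota 0 (m ^ (m - j))).
have eN : m ^ (m - j) = N * m.
  by rewrite /N -expnSr subnSK //; apply: leq_trans lt _; apply: leq_pred.
have cR : N <= size R.
  by rewrite size_filter; rewrite eN; apply: count_red => //; rewrite eN.
exists (take N R); rewrite size_rcons; split => //.
- move: vs; rewrite /valid_stage size_rcons => /andP [_ /allP al].
  apply/andP; split=> //; apply/allP => i; rewrite mem_iota add0n => /andP [_ hi].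
  rewrite nth_rcons.
  case: ltnP => hij; first by apply: al; rewrite mem_iota.
  have -> : i = j by apply/eqP; rewrite eqn_leq hij -ltnS hi.
  rewrite eqxx; apply/and3P; split.
  + by apply: take_sorted; apply: sorted_filter; [exact: ltn_trans | exact: iota_ltn_sorted].
  + apply/allP => a /mem_take; rewrite mem_filter mem_iota => /andP [_ /andP [_]].
    by rewrite add0n.
  + by rewrite size_take_min (minn_idPl cR).
- move=> k; rewrite size_rcons -/N => hk u.
  rewrite root_path_rcons /=.
  have hin : nth 0 (take N R) k \in R.
    by apply: (mem_take (s := R) (n0 := N)); apply: mem_nth; rewrite size_take_min (minn_idPl cR).
  move: hin; rewrite mem_filter mem_iota add0n => /andP [pa /andP [_ ha]].
  have [t et] := root_path_head s (nth 0 (take N R) k).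
  rewrite et in_cons => /orP [/eqP -> //|ut].
  by apply: (Gs _ ha); rewrite et.
Qed.

Lemma build j : j <= m.-1 -> exists s, [/\ valid_stage m s, size s = j & Good s].
Proof.
elim: j => [|j IH] hj.
  by exists [::]; split => //; move=> k _ u.
have [s [vs ss Gs]] := IH (ltnW hj).
have lt : size s < m.-1 by rewrite ss.
have [A [vA sA GA]] := step s vs lt Gs.
by exists (rcons s A); split => //; rewrite sA ss.
Qed.

End P.

Theorem theorem9 (m : nat) : 0 < m -> forall phi : vert -> bool, ~ polychromatic m phi.
Proof.
move=> m0 phi H.
have [s [vs ss Gs]] := @build m phi H m.-1 (leqnn _).
have eN : m ^ (m - size s) = m by rewrite ss; case: (m) m0 => // n _; rewrite /= subSn // subnn expn1.
have hb : 0 + m <= m ^ (m - size s) by rewrite eN.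
have [[u ue pu] _] := H _ (or_introl (ex_intro _ s (ex_intro _ 0
   (And3 vs hb erefl)))).
move: ue => /mapP [a ai eu]; subst u.
move: ai; rewrite mem_iota add0n => /andP [_ ha].
have hv : vertex m (s, a) by rewrite /vertex vs /= eN.
have [_ [w wi pw]] := H _ (or_intror (ex_intro _ (s, a)
   (And3 hv ss erefl))).
have [t et] := root_path_head s a.
move: wi; rewrite et in_cons => /orP [/eqP ew|wt].
  by move: pw pu; rewrite ew => ->.
have ha' : a < m ^ (m - size s) by rewrite eN.
have wb : w \in behead (root_path (s, a)) by rewrite et.
have := Gs a ha' w wb.
by rewrite pw.
Qed.
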